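(* Let $\mathbf{r}_1,\ldots,\mathbf{r}_m$ be duplicate-free temporal-probabilistic (TP) relations and let $Q$ be a non-repeating TP set query over them, i.e., an expression generated by the grammar $Q ::= \mathbf{r}_i \mid Q \cup^{Tp} Q \mid Q \cap^{Tp} Q \mid Q -^{Tp} Q \mid (Q)$ in which every input relation $\mathbf{r}_i$ occurs at most once. Then the lineage expression of every result tuple of $Q$ is in one-occurrence form (1OF), i.e., no tuple identifier occurs more than once in it.
   Context: A TP relation $\mathbf{r}$ with schema $(F,\lambda,T,p)$ is a finite set of tuples $r$, where $r.F=(A_1,\dots,A_m)$ is a tuple of ordinary attribute values (the ''fact''), $r.\lambda$ is a lineage expression, $r.T=[T_s,T_e)$ is an interval over a finite ordered domain $\Omega^T$ of time points, and $r.p\in(0,1]$ is a probability. A lineage expression is a Boolean formula built from tuple identifiers with $\neg,\land,\lor$; for a base tuple $r$, $r.\lambda$ is the atomic formula consisting of its own identifier $r$ (identifiers are distinct across all base tuples). $\mathbf{r}$ is duplicate-free iff for all $r\neq r'$ in $\mathbf{r}$, $r.F\neq r'.F$ or $r.T\cap r'.T=\emptyset$. For a relation $\mathbf{r}$, fact $f$ and time point $t$, $\lambda^{\mathbf{r},f}_t$ denotes $r.\lambda$ if there is $r\in\mathbf{r}$ with $r.F=f$ and $t\in r.T$, and $\mathtt{null}$ otherwise. Lineage-concatenation functions: $\mathbf{and}(\lambda_1,\lambda_2)=(\lambda_1)\land(\lambda_2)$; $\mathbf{andNot}(\lambda_1,\lambda_2)=(\lambda_1)$ if $\lambda_2=\mathtt{null}$,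 else $(\lambda_1)\land\neg(\lambda_2)$; $\mathbf{or}(\lambda_1,\lambda_2)=(\lambda_1)$ if $\lambda_2=\mathtt{null}$, $(\lambda_2)$ if $\lambda_1=\mathtt{null}$, else $(\lambda_1)\lor(\lambda_2)$. TP set operations on relations $\mathbf{r},\mathbf{s}$ with the same schema (a result tuple $\tilde r$ has fact, lineage and interval; its probability is the probability of its lineage): $\tilde r\in\mathbf{r}\cup^{Tp}\mathbf{s}$ iff for all $t\in\tilde r.T$: ($\lambda^{\mathbf{r},\tilde r.F}_t\neq\mathtt{null}$ or $\lambda^{\mathbf{s},\tilde r.F}_t\neq\mathtt{null}$) and $\tilde r.\lambda\equiv\mathbf{or}(\lambda^{\mathbf{r},\tilde r.F}_t,\lambda^{\mathbf{s},\tilde r.F}_t)$; and for all $t'\notin\tilde r.T$: $\tilde r.\lambda\not\equiv\mathbf{or}(\lambda^{\mathbf{r},\tilde r.F}_{t'},\lambda^{\mathbf{s},\tilde r.F}_{t'})$. $\tilde r\in\mathbf{r}\cap^{Tp}\mathbf{s}$ iff for all $t\in\tilde r.T$: $\lambda^{\mathbf{r},\tilde r.F}_t\neq\mathtt{null}$, $\lambda^{\mathbf{s},\tilde r.F}_t\neq\mathtt{null}$ and $\tilde r.\lambda\equiv\mathbf{and}(\lambda^{\mathbf{r},\tilde r.F}_t,\lambda^{\mathbf{s},\tilde r.F}_t)$; and for all $t'\notin\tilde r.T$: $\tilde r.\lambda\not\equiv\mathbf{and}(\lambda^{\mathbf{r},\tilde r.F}_{t'},\lambda^{\mathbf{s},\tilde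 r.F}_{t'})$. $\tilde r\in\mathbf{r}-^{Tp}\mathbf{s}$ iff for all $t\in\tilde r.T$: $\lambda^{\mathbf{r},\tilde r.F}_t\neq\mathtt{null}$ and $\tilde r.\lambda\equiv\mathbf{andNot}(\lambda^{\mathbf{r},\tilde r.F}_t,\lambda^{\mathbf{s},\tilde r.F}_t)$; and for all $t'\notin\tilde r.T$: $\tilde r.\lambda\not\equiv\mathbf{andNot}(\lambda^{\mathbf{r},\tilde r.F}_{t'},\lambda^{\mathbf{s},\tilde r.F}_{t'})$. The result lineages are the formulas produced by the concatenation functions when applying the operations bottom-up in $Q$. *)

(* Defs.v *)
From Stdlib Require Import Reals List Arith.
Import ListNotations.

Inductive lineage : Type :=
| LId  : nat -> lineage
| LNot : lineage -> lineage
| LAnd : lineage -> lineage -> lineage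
| LOr  : lineage -> lineage -> lineage.

Fixpoint lin_ids (l : lineage) : list nat :=
  match l with
  | LId x => [x]
  | LNot a => lin_ids a
  | LAnd a b | LOr a b => lin_ids a ++ lin_ids b
  end.

Definition one_occurrence_form (l : lineage) : Prop := NoDup (lin_ids l).

Fixpoint lin_eval (v : nat -> bool) (l : lineage) : bool :=
  match l with
  | LId x => v x
  | LNot a => negb (lin_eval v a)
  | LAnd a b => andb (lin_eval v a) (lin_eval v b)
  | LOr a b => orb (lin_eval v a) (lin_eval v b)
  end.

Definition lin_equiv (a b : lineage) : Prop := forall v, lin_eval v a = lin_eval v b.

(* Time domain Omega^T = {0, ..., N-1}; intervals [ts, te) with ts < te <= N. *)

(* Base tuples: fact, own identifier (lineage = atomic identifier), interval,
   probability in (0,1]. *)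
Record base_tuple (F : Type) : Type := BaseTuple {
  b_fact : F; b_id : nat; b_ts : nat; b_te : nat; b_p : R }.
Arguments BaseTuple {F}.
Arguments b_fact {F}. Arguments b_id {F}. Arguments b_ts {F}.
Arguments b_te {F}. Arguments b_p {F}.

Definition base_relation (F : Type) := list (base_tuple F).

Definition base_tuple_wf {F} (N : nat) (b : base_tuple F) : Prop :=
  b_ts b < b_te b /\ b_te b <= N /\ (0 < b_p b)%R /\ (b_p b <= 1)%R.

Definition b_in_T {F} (t : nat) (b : base_tuple F) : Prop := b_ts b <= t < b_te b.

Definition base_duplicate_free {F} (r : base_relation F) : Prop :=
  forall i j, i < length r -> j < length r -> i <> j ->
  forall b b', nth_error r i = Some b -> nth_error r j = Some b' ->
  b_fact b <> b_fact b' \/ ~ (exists t, b_in_T t b /\ b_in_T t b').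

(* (Result) tuples: fact, lineage, interval.  Probability of a result tuple is
   the probability of its lineage and plays no role here. *)
Record tp_tuple (F : Type) : Type := TPTuple {
  fact : F; lin : lineage; ts : nat; te : nat }.
Arguments TPTuple {F}.
Arguments fact {F}. Arguments lin {F}. Arguments ts {F}. Arguments te {F}.

Definition in_T {F} (t : nat) (x : tp_tuple F) : Prop := ts x <= t < te x.

Definition tp_rel (F : Type) := tp_tuple F -> Prop.

Definition base_as_rel {F} (r : base_relation F) : tp_rel F :=
  fun x => exists b, In b r /\ fact x = b_fact b /\ lin x = LId (b_id b)
                     /\ ts x = b_ts b /\ te x = b_te b.

(* lambda^{r,f}_t = o  (o = None encodes null) *)
Definition lin_at {F} (r : tp_rel F) (f : F) (t : nat) (o : option lineage) : Prop :=
  match o with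
  | Some l => exists x, r x /\ fact x = f /\ in_T t x /\ lin x = l
  | None => ~ exists x, r x /\ fact x = f /\ in_T t x
  end.

(* Lineage concatenation functions; None = undefined / null arguments where
   the paper's function is not applicable. *)
Definition lc_or (a b : option lineage) : option lineage :=
  match a, b with
  | Some l1, None => Some l1
  | None, Some l2 => Some l2
  | Some l1, Some l2 => Some (LOr l1 l2)
  | None, None => None
  end.

Definition lc_and (a b : option lineage) : option lineage :=
  match a, b with
  | Some l1, Some l2 => Some (LAnd l1 l2)
  | _, _ => None
  end.

Definition lc_andNot (a b : option lineage) : option lineage :=
  match a, b with
  | Some l1, None => Some l1
  | Some l1, Some l2 => Some (LAnd l1 (LNot l2))
  | None, _ => None
  end.

Definition nonnull (o : option lineage) : bool :=
  match o with Some _ => true | None => false end.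

(* Generic TP set operation: nn is the non-null requirement on
   (lambda^r_t, lambda^s_t), cc the concatenation function. *)
Definition tp_setop {F} (N : nat) (nn : bool -> bool -> bool)
  (cc : option lineage -> option lineage -> option lineage)
  (r s : tp_rel F) : tp_rel F :=
  fun x =>
    ts x < te x /\ te x <= N /\
    (forall t, in_T t x ->
       exists a b, lin_at r (fact x) t a /\ lin_at s (fact x) t b /\
                   nn (nonnull a) (nonnull b) = true /\ cc a b = Some (lin x)) /\
    (forall t', t' < N -> ~ in_T t' x ->
       forall a b, lin_at r (fact x) t' a -> lin_at s (fact x) t' b ->
       forall l, cc a b = Some l -> ~ lin_equiv (lin x) l).

Definition tp_union {F} N (r s : tp_rel F) := tp_setop N orb lc_or r s.
Definition tp_inter {F} N (r s : tp_rel F) := tp_setop N andb lc_and r s.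
Definition tp_minus {F} N (r s : tp_rel F) := tp_setop N (fun a _ => a) lc_andNot r s.

Inductive query : Type :=
| QRel : nat -> query
| QUnion : query -> query -> query
| QInter : query -> query -> query
| QMinus : query -> query -> query.

Fixpoint q_rels (q : query) : list nat :=
  match q with
  | QRel i => [i]
  | QUnion a b | QInter a b | QMinus a b => q_rels a ++ q_rels b
  end.

Definition non_repeating (q : query) : Prop := NoDup (q_rels q).

Fixpoint eval_query {F} (N : nat) (rels : list (base_relation F)) (q : query) : tp_rel F :=
  match q with
  | QRel i => base_as_rel (nth i rels [])
  | QUnion a b => tp_union N (eval_query N rels a) (eval_query N rels b)
  | QInter a b => tp_inter N (eval_query N rels a) (eval_query N rels b)
  | QMinus a b => tp_minus N (eval_query N rels a) (eval_query N rels b)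
  end.

(* Main.v *)
Require Import Defs.
From Stdlib Require Import Reals List Arith Lia.
Import ListNotations.

Lemma nodup_app_disj {A} (l1 l2 : list A) a :
  NoDup (l1 ++ l2) -> In a l1 -> In a l2 -> False.
Proof.
  induction l1 as [|y l1 IH]; simpl; intros H H1 H2; [easy|].
  inversion H as [|? ? Hn Hd]; subst. destruct H1 as [->|H1].
  - apply Hn, in_or_app; auto.
  - eauto.
Qed.

Lemma nodup_concat_disj {A B} (f : A -> list B) (l : list A) d :
  NoDup (concat (map f l)) -> forall i j x, i < length l -> j < length l -> i <> j ->
  In x (f (nth i l d)) -> In x (f (nth j l d)) -> False.
Proof.
  induction l as [|r l IH]; simpl; intros H i j x Hi Hj Hij H1 H2; [lia|].
  destruct i as [|i], j as [|j].
  - lia.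
  - eapply nodup_app_disj; [exact H| exact H1|].
    rewrite <- flat_map_concat_map. apply in_flat_map. exists (nth j l d).
    split; [apply nth_In; lia| exact H2].
  - eapply nodup_app_disj; [exact H| exact H2|].
    rewrite <- flat_map_concat_map. apply in_flat_map. exists (nth i l d).
    split; [apply nth_In; lia| exact H1].
  - eapply (IH (NoDup_app_remove_l _ _ H) i j x); try lia; auto.
Qed.


Definition good {F} (r : tp_rel F) (S : list nat) : Prop :=
  forall y, r y -> NoDup (lin_ids (lin y)) /\ incl (lin_ids (lin y)) S.

Definition cc_ok (cc : option lineage -> option lineage -> option lineage) : Prop :=
  forall a b l, cc a b = Some l ->
   (exists l1, a = Some l1 /\ ((b = None /\ l = l1) \/
      exists l2, b = Some l2 /\ lin_ids l = lin_ids l1 ++ lin_ids l2))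
   \/ (a = None /\ b = Some l).

Lemma cc_ok_or : cc_ok lc_or.
Proof. intros [a|] [b|] l H; simpl in H; inversion H; subst; eauto 10. Qed.
Lemma cc_ok_and : cc_ok lc_and.
Proof. intros [a|] [b|] l H; simpl in H; inversion H; subst; eauto 10. Qed.
Lemma cc_ok_andNot : cc_ok lc_andNot.
Proof. intros [a|] [b|] l H; simpl in H; inversion H; subst; eauto 10. Qed.

Lemma lin_at_good {F} (r : tp_rel F) S f t l :
  good r S -> lin_at r f t (Some l) -> NoDup (lin_ids l) /\ incl (lin_ids l) S.
Proof. intros G (y & Hy & _ & _ & <-). auto. Qed.

Lemma setop_good {F} N nn cc (r s : tp_rel F) S1 S2 :
  good r S1 -> good s S2 -> (forall z, In z S1 -> In z S2 -> False) -> cc_ok cc ->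
  good (tp_setop N nn cc r s) (S1 ++ S2).
Proof.
  intros G1 G2 D C y (Hlt & _ & H & _).
  destruct (H (ts y)) as (a & b & Ha & Hb & _ & Hc). { unfold in_T; lia. }
  destruct (C _ _ _ Hc) as [(l1 & -> & [[-> Hl] | (l2 & -> & Hl)]) | [-> ->]].
  - rewrite Hl. destruct (lin_at_good _ _ _ _ _ G1 Ha) as [N1 I1].
    split; auto. intros z Hz. apply in_or_app; auto.
  - destruct (lin_at_good _ _ _ _ _ G1 Ha) as [N1 I1].
    destruct (lin_at_good _ _ _ _ _ G2 Hb) as [N2 I2].
    rewrite Hl. split.
    + apply NoDup_app; auto. intros z z1 z2. eauto.
    + intros z Hz. apply in_app_or in Hz. apply in_or_app. destruct Hz; auto.
  - destruct (lin_at_good _ _ _ _ _ G2 Hb) as [N2 I2].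
    split; auto. intros z Hz. apply in_or_app; auto.
Qed.

Definition qS {F} (rels : list (base_relation F)) (q : query) : list nat :=
  flat_map (fun i => map b_id (nth i rels [])) (q_rels q).

Lemma qS_disj {F} (rels : list (base_relation F)) q1 q2 :
  NoDup (map b_id (concat rels)) ->
  (forall i, In i (q_rels q1 ++ q_rels q2) -> i < length rels) ->
  NoDup (q_rels q1 ++ q_rels q2) ->
  forall z, In z (qS rels q1) -> In z (qS rels q2) -> False.
Proof.
  intros HN Hl Hq z H1 H2. unfold qS in *.
  apply in_flat_map in H1 as (i & Hi & H1).
  apply in_flat_map in H2 as (j & Hj & H2).
  rewrite concat_map in HN.
  apply (nodup_concat_disj (map b_id) rels [] HN i j z); auto.
  - apply Hl, in_or_app; auto.
  - apply Hl, in_or_app; auto.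
  - intros ->. eapply nodup_app_disj; eauto.
Qed.

Lemma query_good {F} N (rels : list (base_relation F)) q :
  NoDup (map b_id (concat rels)) ->
  (forall i, In i (q_rels q) -> i < length rels) ->
  NoDup (q_rels q) -> good (eval_query N rels q) (qS rels q).
Proof.
  intros HN. induction q as [i|q1 IH1 q2 IH2|q1 IH1 q2 IH2|q1 IH1 q2 IH2]; intros Hl Hq.
  - intros y (b & Hb & _ & -> & _). simpl. split.
    + constructor; [easy|constructor].
    + intros z [<-|[]]. unfold qS; simpl. rewrite app_nil_r.
      apply in_map; auto.
  - simpl in *. unfold qS; simpl; rewrite flat_map_app.
    apply setop_good; [apply IH1|apply IH2| apply (qS_disj rels q1 q2 HN Hl Hq)|apply cc_ok_or];
    try (intros; apply Hl, in_or_app; auto);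
    [eapply NoDup_app_remove_r|eapply NoDup_app_remove_l]; eauto.
  - simpl in *. unfold qS; simpl; rewrite flat_map_app.
    apply setop_good; [apply IH1|apply IH2| apply (qS_disj rels q1 q2 HN Hl Hq)|apply cc_ok_and];
    try (intros; apply Hl, in_or_app; auto);
    [eapply NoDup_app_remove_r|eapply NoDup_app_remove_l]; eauto.
  - simpl in *. unfold qS; simpl; rewrite flat_map_app.
    apply setop_good; [apply IH1|apply IH2| apply (qS_disj rels q1 q2 HN Hl Hq)|apply cc_ok_andNot];
    try (intros; apply Hl, in_or_app; auto);
    [eapply NoDup_app_remove_r|eapply NoDup_app_remove_l]; eauto.
Qed.

Theorem theorem1 (F : Type) (N : nat) (rels : list (base_relation F)) (q : query) :
  (* well-formed base tuples (interval in Omega^T = {0..N-1}, p in (0,1]) *)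
  (forall r, In r rels -> forall b, In b r -> base_tuple_wf N b) ->
  (* identifiers distinct across all base tuples *)
  NoDup (map b_id (concat rels)) ->
  (* duplicate-free input relations *)
  (forall r, In r rels -> base_duplicate_free r) ->
  (* Q is a query over r_1..r_m that is non-repeating *)
  (forall i, In i (q_rels q) -> i < length rels) ->
  non_repeating q ->
  forall x, eval_query N rels q x -> one_occurrence_form (lin x).
Proof.
  intros _ HN _ Hl Hq x Hx.
  exact (proj1 (query_good N rels q HN Hl Hq x Hx)).
Qed.
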